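(* Let $L>0$, $K>0$, $L_p a>0$, $t_0>0$, $0<\nu_{\min}<\nu_{\max}$, and let $\sigma_1,\sigma_2,p_0,w_0,w_D,q_l$ be real constants. Put $\beta=\frac{L_paL^2}{K}$ and $\nu(x)=\nu_{\max}-(\nu_{\max}-\nu_{\min})x$ for $x\in[0,1]$. Let $p,u,w$ be twice continuously differentiable functions on $[0,1]$ satisfying $$\frac{1}{t_0}\frac{d}{dx}\Big(\nu \frac{dp}{dx}\Big) - \sigma_1\frac{d}{dx}\Big(\nu \frac{du}{dx}\Big) - \sigma_2\frac{d}{dx}\Big(\nu\frac{dw}{dx}\Big) + q_U - q_l = 0 \quad\text{on } [0,1],$$ where $$q_U(x) = \beta\Big(\frac{1}{t_0}(p_0-p(x)) + \sigma_1 u(x) + \sigma_2 (w(x)-w_0)\Big),$$ together with $p(0)=1$, $u(0)=1$, $w(0)=w_D$, $p'(1)=u'(1)=w'(1)=0$. Define $$j_U(x) = L\nu(x)\Big(-\frac{1}{t_0}p'(x) + \sigma_1 u'(x) + \sigma_2 w'(x)\Big).$$ Put $\nu_*=\frac{\nu_{\max}}{\nu_{\max}-\nu_{\min}}$, $\delta_*=\frac{L_paL^2}{K(\nu_{\max}-\nu_{\min})}$, $z(x)=2\sqrt{\delta_*(\nu_*-x)}$, $z_0=z(0)$, $z_1=z(1)$, $$q_0 = \beta\Big(\frac{1}{t_0}(p_0-1)+\sigma_1+\sigma_2 (w_D - w_0)\Big),\quad D = I_0(z_0)K_1(z_1)+K_0(z_0)I_1(z_1),$$ $$C_1=\frac{(q_0-q_l)K_1(z_1)}{D},\qquad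 C_2=\frac{(q_0-q_l)I_1(z_1)}{D},$$ where $I_0,I_1$ and $K_0,K_1$ are the modified Bessel functions of the first and second (Macdonald) kind of orders $0$ and $1$. Then for all $x\in[0,1]$ $$q_U(x)=C_1I_0(z(x))+C_2K_0(z(x))+q_l,\qquad j_U(x)=-L\sqrt{\frac{\nu_*-x}{\delta_*}}\,\Big(C_1I_1(z(x))-C_2K_1(z(x))\Big).$$
   Context: This is the steady-state fluid balance equation of a non-dimensionalised model of fluid, glucose and albumin transport in peritoneal dialysis, under the assumptions that the reflection coefficients in tissue and capillary wall coincide and that the fractional void volume $\nu$ decreases linearly in the non-dimensional depth $x\in[0,1]$ from $\nu_{\max}$ to $\nu_{\min}$. Here $p$ is non-dimensional hydrostatic pressure, $u,w$ non-dimensional glucose and albumin concentrations, $q_U$ the density of fluid flux from blood to tissue, $j_U$ the fluid flux across the tissue, $q_l$ the lymphatic flux density, $w_D$ and $w_0$ the non-dimensional albumin concentrations in dialysate and blood. Note $\nu_*>1$ and $\delta_*>0$, so $z(x)>0$ on $[0,1]$. *)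

(* Defs.v *)
From Stdlib Require Import Reals Factorial.
From Coquelicot Require Import Coquelicot.
Open Scope R_scope.

Definition BesselI (n : nat) (z : R) : R :=
  Series (fun k => (z / 2) ^ (2 * k + n) / (INR (fact k) * INR (fact (k + n)))).

Definition BesselK (n : nat) (z : R) : R :=
  RInt_gen (fun t => exp (- z * cosh t) * cosh (INR n * t))
    (at_point 0) (Rbar_locally p_infty).

(* f is twice continuously differentiable on [0,1] (in the two-sided sense at
   each point of [0,1], i.e. f is taken as a function on R). *)
Definition C2_on01 (f : R -> R) : Prop :=
  forall x, 0 <= x <= 1 ->
    ex_derive f x /\ ex_derive (Derive f) x /\ continuous (Derive (Derive f)) x.

(* Main.v *)
Require Import Defs.
From Stdlib Require Import Reals Factorial Lra Lia.
From Coquelicot Require Import Coquelicot.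
Open Scope R_scope.

Definition cc (u : R) := (u + / u) / 2.
Definition Gk (k : nat) (z u : R) : R :=
  if Rle_dec u 0 then 0 else cc u ^ k * exp (- z * cc u) / u.

Lemma exp_ge_pow (y : R) (m : nat) : 0 <= y -> y ^ m / INR (fact m) <= exp y.
Proof.
  intros Hy. eapply Rle_trans; [| apply (exp_ge_taylor y m Hy)].
  destruct m as [|m].
  - simpl. lra.
  - rewrite tech5.
    assert (0 <= sum_f_R0 (fun k : nat => y ^ k / INR (fact k)) m).
    { apply cond_pos_sum. intros n. apply Rmult_le_pos. apply pow_le; auto.
      apply Rlt_le, Rinv_0_lt_compat, INR_fact_lt_0. }
    lra.
Qed.

Definition Mk (k : nat) (a : R) := INR (fact (k + 2)) * (2 / a) ^ (k + 2).

Lemma Mk_pos k a : 0 < a -> 0 < Mk k a.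
Proof.
  intros Ha. unfold Mk. apply Rmult_lt_0_compat. apply INR_fact_lt_0.
  apply pow_lt. apply Rdiv_lt_0_compat; lra.
Qed.

Lemma Gk_nonneg k z u : 0 <= Gk k z u.
Proof.
  unfold Gk. destruct (Rle_dec u 0). lra.
  assert (0 < cc u). { unfold cc. assert (0 < / u) by (apply Rinv_0_lt_compat; lra). lra. }
  apply Rmult_le_pos. apply Rmult_le_pos. apply pow_le; lra. apply Rlt_le, exp_pos.
  apply Rlt_le, Rinv_0_lt_compat; lra.
Qed.

Lemma Gk_bound k a z u : 0 < a -> a <= z -> 0 < u <= 1 -> Gk k z u <= Mk k a * u.
Proof.
  intros Ha Haz Hu. unfold Gk. destruct (Rle_dec u 0). lra.
  set (v := / u).
  assert (Hv : 1 <= v). { unfold v. rewrite <- Rinv_1. apply Rinv_le_contravar; lra. }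
  assert (Huv : u * v = 1). { unfold v. field. lra. }
  assert (Hc1 : cc u <= v). { unfold cc. change (/ u) with v. lra. }
  assert (Hc2 : v / 2 <= cc u). { unfold cc. change (/ u) with v. assert (0 < u) by lra. lra. }
  set (y := a * v / 2).
  assert (Hy : 0 < y). { unfold y. nra. }
  assert (He : exp (- z * cc u) <= exp (- y)).
  { assert (a * (v/2) <= z * cc u) by (apply Rmult_le_compat; lra).
    assert (Hl : - z * cc u <= - y) by (unfold y; lra).
    destruct Hl as [Hl|Hl]. left. apply exp_increasing; auto. rewrite Hl. lra. }
  assert (He2 : exp (- y) <= INR (fact (k+2)) / y ^ (k + 2)).
  { rewrite exp_Ropp. pose proof (exp_ge_pow y (k+2) (Rlt_le _ _ Hy)) as H.
    pose proof (INR_fact_lt_0 (k+2)). pose proof (pow_lt y (k+2) Hy).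
    apply (Rmult_le_reg_r (exp y * y ^ (k+2) / INR (fact (k+2)))).
    apply Rdiv_lt_0_compat. apply Rmult_lt_0_compat; auto. apply exp_pos. auto.
    replace (/ exp y * (exp y * y ^ (k + 2) / INR (fact (k + 2)))) with (y ^ (k+2) / INR (fact (k+2))).
    2:{ field. split. lra. pose proof (exp_pos y). lra. }
    replace (INR (fact (k + 2)) / y ^ (k + 2) * (exp y * y ^ (k + 2) / INR (fact (k + 2)))) with (exp y).
    2:{ field. lra. } auto. }
  assert (Hck : cc u ^ k <= v ^ k). { apply pow_incr. split; [|auto]. lra. }
  assert (0 <= cc u ^ k) by (apply pow_le; lra).
  assert (Hfin : cc u ^ k * exp (- z * cc u) / u <= v ^ k * (INR (fact (k+2)) / y ^ (k+2)) * v).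
  { unfold Rdiv at 1. fold v. apply Rmult_le_compat_r. lra.
    apply Rmult_le_compat; auto. apply Rlt_le, exp_pos. lra. }
  eapply Rle_trans. apply Hfin. right.
  unfold Mk, y.
  assert (E1: (a*v/2)^(k+2) = (a/2)^(k+2) * (v^k * (v*v))).
  { replace (a*v/2) with ((a/2)*v) by field. rewrite Rpow_mult_distr, (pow_add v). simpl. ring. }
  assert (E2: (2/a)^(k+2) = / (a/2)^(k+2)).
  { rewrite <- pow_inv. f_equal. field. lra. }
  rewrite E1, E2. replace u with (/ v) by (unfold v; field; lra).
  assert ((a/2)^(k+2) <> 0) by (apply pow_nonzero; lra).
  assert (v^k <> 0) by (apply pow_nonzero; lra).
  field. repeat split; lra.
Qed.
Definition Gs (k : nat) (z u : R) : R := cc u ^ k * exp (- z * cc u) / u.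

Lemma Gs_cont k z0 u0 : u0 <> 0 -> continuity_2d_pt (Gs k) z0 u0.
Proof.
  intros Hu.
  assert (Hc : continuity_2d_pt (fun _ u => cc u) z0 u0).
  { apply continuity_2d_pt_ext with (f := fun z u => (u + / u) * / 2).
    intros; unfold cc; reflexivity.
    apply continuity_2d_pt_mult. apply continuity_2d_pt_plus.
    apply continuity_2d_pt_id2. apply continuity_2d_pt_inv. apply continuity_2d_pt_id2. auto.
    apply continuity_2d_pt_const. }
  unfold Gs.
  apply continuity_2d_pt_ext with
    (f := fun z u => (fun c => c ^ k) (cc u) * exp (- z * cc u) * / u).
  { intros; reflexivity. }
  apply continuity_2d_pt_mult. apply continuity_2d_pt_mult.
  - apply continuity_1d_2d_pt_comp with (f := fun c => c ^ k) (g := fun _ u => cc u). apply derivable_continuous_pt, derivable_pt_pow. auto.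
  - apply continuity_1d_2d_pt_comp with (f := exp) (g := fun z u => - z * cc u). apply derivable_continuous_pt, derivable_pt_exp.
    apply continuity_2d_pt_mult. apply continuity_2d_pt_opp, continuity_2d_pt_id1. auto.
  - apply continuity_2d_pt_inv. apply continuity_2d_pt_id2. auto.
Qed.

Lemma Gk_cont k z0 u0 : 0 < z0 -> continuity_2d_pt (Gk k) z0 u0.
Proof.
  intros Hz.
  destruct (Rtotal_order u0 0) as [Hneg|[H0|Hpos]].
  - apply continuity_2d_pt_ext_loc with (f := fun _ _ => 0).
    exists (mkposreal (- u0) ltac:(lra)). intros u v _ Hv. simpl in Hv.
    unfold Gk. destruct (Rle_dec v 0). auto.
    exfalso. apply Rabs_def2 in Hv. lra.
    apply continuity_2d_pt_const.
  - subst u0. intros eps.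
    set (a := z0 / 2).
    assert (Ha : 0 < a) by (unfold a; lra).
    pose proof (Mk_pos k a Ha) as HM.
    assert (Hd : 0 < Rmin 1 (Rmin a (eps / Mk k a))).
    { apply Rmin_pos. lra. apply Rmin_pos. lra. apply Rdiv_lt_0_compat. apply cond_pos. auto. }
    exists (mkposreal _ Hd). intros u v Hu Hv. simpl in Hu, Hv.
    assert (Gk k z0 0 = 0) as ->. { unfold Gk. destruct (Rle_dec 0 0). auto. lra. }
    rewrite Rminus_0_r.
    pose proof (Rmin_l 1 (Rmin a (eps / Mk k a))).
    pose proof (Rmin_r 1 (Rmin a (eps / Mk k a))).
    pose proof (Rmin_l a (eps / Mk k a)).
    pose proof (Rmin_r a (eps / Mk k a)).
    apply Rabs_def2 in Hu. apply Rabs_def2 in Hv.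
    rewrite Rminus_0_r in Hv.
    destruct (Rle_dec v 0) as [Hv0|Hv0].
    + unfold Gk. destruct (Rle_dec v 0). rewrite Rabs_R0. apply cond_pos. lra.
    + rewrite Rabs_pos_eq by apply Gk_nonneg.
      eapply Rle_lt_trans. apply (Gk_bound k a u v). auto. unfold a in *; lra. lra.
      apply Rlt_le_trans with (Mk k a * (eps / Mk k a)).
      apply Rmult_lt_compat_l. auto. lra. right. field. lra.
  - apply continuity_2d_pt_ext_loc with (f := Gs k).
    exists (mkposreal u0 Hpos). intros u v _ Hv. simpl in Hv.
    unfold Gk. destruct (Rle_dec v 0). exfalso. apply Rabs_def2 in Hv. lra. reflexivity.
    apply Gs_cont. lra.
Qed.

Lemma cont2d_snd f x y : continuity_2d_pt f x y -> continuous (f x) y.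
Proof.
  intros H. apply continuity_pt_filterlim. intros eps Heps.
  destruct (H (mkposreal eps Heps)) as [d Hd].
  exists d. split. apply cond_pos. intros t [_ Ht]. simpl in *. unfold R_dist in *.
  apply Hd. rewrite Rminus_eq_0, Rabs_R0. apply cond_pos. auto.
Qed.

Lemma Gk_cont1 k z u : 0 < z -> continuous (Gk k z) u.
Proof. intros; apply cont2d_snd, Gk_cont; auto. Qed.

Lemma Gk_exRInt k z a b : 0 < z -> ex_RInt (Gk k z) a b.
Proof. intros. apply (ex_RInt_continuous (V:=R_CompleteNormedModule)). intros; apply Gk_cont1; auto. Qed.

Lemma Gk_derive k z u : is_derive (fun y => Gk k y u) z (- Gk (S k) z u).
Proof.
  unfold Gk. destruct (Rle_dec u 0).
  - auto_derive. auto. ring.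
  - auto_derive. auto. simpl. unfold Rdiv. ring.
Qed.
Lemma locally_pos z : 0 < z -> locally z (fun y => 0 < y).
Proof. intros Hz. apply (open_gt 0). auto. Qed.

Lemma KD k z : 0 < z ->
  is_derive (fun y => RInt (Gk k y) 0 1) z (- RInt (Gk (S k) z) 0 1).
Proof.
  intros Hz.
  assert (HD : forall u v, Derive (fun y => Gk k y v) u = - Gk (S k) u v).
  { intros; apply is_derive_unique, Gk_derive. }
  pose proof (is_derive_RInt_param (Gk k) 0 1 z) as H.
  assert (E : RInt (fun t => Derive (fun u => Gk k u t) z) 0 1 = - RInt (Gk (S k) z) 0 1).
  { rewrite (RInt_ext _ (fun t => opp (Gk (S k) z t))).
    rewrite (RInt_opp (V:=R_CompleteNormedModule)). reflexivity. apply Gk_exRInt; auto.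
    intros; rewrite HD; reflexivity. }
  rewrite <- E. apply H.
  - apply filter_forall. intros y t _. eexists. apply Gk_derive.
  - intros t _. apply continuity_2d_pt_ext with (f := fun u v => - Gk (S k) u v).
    intros; rewrite HD; reflexivity.
    apply continuity_2d_pt_opp, Gk_cont; auto.
  - apply (filter_imp (fun y => 0 < y)). intros; apply Gk_exRInt; auto.
    apply locally_pos; auto.
Qed.
Definition hK (n : nat) (z t : R) := exp (- z * cosh t) * cosh (INR n * t).

Lemma cc_cosh u : 0 < u -> cosh (- ln u) = cc u.
Proof.
  intros Hu. unfold cosh, cc. rewrite Ropp_involutive, exp_Ropp, exp_ln by auto.
  field. lra.
Qed.

Lemma hK_G n z u : (n <= 1)%nat -> 0 < u -> / u * hK n z (- ln u) = Gk n z u.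
Proof.
  intros Hn Hu. unfold hK, Gk. destruct (Rle_dec u 0). lra.
  rewrite cc_cosh by auto.
  destruct n as [|[|n]]; [| |lia].
  - simpl. rewrite Rmult_0_l. unfold cosh. rewrite Ropp_0, exp_0. field. lra.
  - simpl INR. rewrite Rmult_1_l, cc_cosh by auto. simpl. field. lra.
Qed.

Lemma hK_cont n z t : continuous (hK n z) t.
Proof. apply (ex_derive_continuous (K:=R_AbsRing) (V:=R_NormedModule)). unfold hK, cosh. auto_derive. auto. Qed.

Lemma hK_trunc n z b : (n <= 1)%nat -> 0 < z -> 0 <= b ->
  is_RInt (hK n z) 0 b (RInt (Gk n z) (exp (- b)) 1).
Proof.
  intros Hn Hz Hb.
  assert (He : 0 < exp (- b) <= 1).
  { split. apply exp_pos. rewrite <- exp_0. destruct (Req_dec b 0). subst; rewrite Ropp_0; lra.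
    left; apply exp_increasing; lra. }
  assert (Hex : ex_RInt (hK n z) 0 b).
  { apply (ex_RInt_continuous (V:=R_CompleteNormedModule)). intros; apply hK_cont. }
  pose proof (RInt_comp (V:=R_CompleteNormedModule) (hK n z) (fun u => - ln u) (fun u => - / u) (exp (- b)) 1) as H.
  cbv beta in H. rewrite ln_exp, Ropp_involutive, ln_1, Ropp_0 in H.
  assert (E : RInt (hK n z) 0 b = RInt (Gk n z) (exp (- b)) 1).
  { rewrite <- (opp_RInt_swap (V:=R_CompleteNormedModule) (hK n z) b 0).
    2:{ apply (ex_RInt_continuous (V:=R_CompleteNormedModule)). intros; apply hK_cont. }
    rewrite <- H.
    - rewrite (RInt_ext _ (fun y => opp (Gk n z y))).
      rewrite (RInt_opp (V:=R_CompleteNormedModule)). unfold opp; simpl. ring.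
      apply (ex_RInt_continuous (V:=R_CompleteNormedModule)). intros; apply Gk_cont1; auto.
      intros x Hx. rewrite Rmin_left, Rmax_right in Hx by lra.
      unfold scal; simpl; unfold mult; simpl. unfold opp; simpl.
      rewrite <- hK_G by (auto; lra). ring.
    - intros; apply hK_cont.
    - intros x Hx. rewrite Rmin_left, Rmax_right in Hx by lra. split.
      + auto_derive. lra. field. lra.
      + apply (ex_derive_continuous (K:=R_AbsRing) (V:=R_NormedModule)). auto_derive. lra. }
  rewrite <- E. apply (RInt_correct (V:=R_CompleteNormedModule)); auto.
Qed.
Lemma Gk_le_M n z u : 0 < z -> 0 <= u <= 1 -> Rabs (Gk n z u) <= Mk n z.
Proof.
  intros Hz Hu. rewrite Rabs_pos_eq by apply Gk_nonneg.
  destruct (Rle_dec u 0).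
  - unfold Gk. destruct (Rle_dec u 0); [|lra]. left; apply Mk_pos; auto.
  - eapply Rle_trans. apply (Gk_bound n z z u); lra.
    pose proof (Mk_pos n z Hz). nra.
Qed.

Lemma K_gen n z : (n <= 1)%nat -> 0 < z ->
  is_RInt_gen (hK n z) (at_point 0) (Rbar_locally p_infty) (RInt (Gk n z) 0 1).
Proof.
  intros Hn Hz P [eps HP].
  set (M := Mk n z). assert (HM : 0 < M) by (apply Mk_pos; auto).
  apply Filter_prod with (Q := fun a => a = 0) (R := fun b => Rmax 0 (- ln (eps / M)) < b).
  - reflexivity.
  - exists (Rmax 0 (- ln (eps / M))). auto.
  - intros a b -> Hb. simpl.
    pose proof (Rmax_l 0 (- ln (eps / M))). pose proof (Rmax_r 0 (- ln (eps / M))).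
    exists (RInt (Gk n z) (exp (- b)) 1). split. apply hK_trunc; auto; lra.
    apply HP.
    assert (He : 0 < exp (- b) <= 1).
    { split. apply exp_pos. rewrite <- exp_0. destruct (Req_dec b 0). subst; rewrite Ropp_0; lra.
      left; apply exp_increasing; lra. }
    assert (He2 : exp (- b) < eps / M).
    { rewrite <- (exp_ln (eps / M)). apply exp_increasing. lra.
      apply Rdiv_lt_0_compat. apply cond_pos. auto. }
    rewrite <- (RInt_Chasles (V:=R_CompleteNormedModule) (Gk n z) 0 (exp (- b)) 1)
      by (apply Gk_exRInt; auto).
    unfold ball; simpl; unfold AbsRing_ball, abs, minus, plus, opp; simpl.
    replace (RInt (Gk n z) (exp (- b)) 1 + - (RInt (Gk n z) 0 (exp (- b)) + RInt (Gk n z) (exp (- b)) 1))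
      with (- RInt (Gk n z) 0 (exp (- b))) by ring.
    rewrite Rabs_Ropp.
    eapply Rle_lt_trans. apply abs_RInt_le_const. lra. apply Gk_exRInt; auto.
    intros t Ht. apply (Gk_le_M n z t); auto; lra.
    apply Rlt_le_trans with (eps / M * M). apply Rmult_lt_compat_r; lra.
    right. field. lra.
Qed.

Lemma BesselK_eq n z : (n <= 1)%nat -> 0 < z -> BesselK n z = RInt (Gk n z) 0 1.
Proof.
  intros Hn Hz. unfold BesselK. apply is_RInt_gen_unique.
  apply (K_gen n z Hn Hz).
Qed.
Definition ss (u : R) := (/ u - u) / 2.
Definition PP (z u : R) := if Rle_dec u 0 then 0 else ss u * exp (- z * cc u).
Definition Pd (z u : R) := z * Gk 2 z u - z * Gk 0 z u - Gk 1 z u.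

Lemma Gk_cpt k z u : 0 < z -> continuity_pt (Gk k z) u.
Proof. intros. apply continuity_pt_filterlim, Gk_cont1; auto. Qed.

Lemma Pd_cont z u : 0 < z -> continuous (Pd z) u.
Proof.
  intros Hz. apply continuity_pt_filterlim. unfold Pd.
  apply continuity_pt_minus. apply continuity_pt_minus.
  apply continuity_pt_mult. apply continuity_pt_const. intros a b; auto. apply Gk_cpt; auto.
  apply continuity_pt_mult. apply continuity_pt_const. intros a b; auto. apply Gk_cpt; auto.
  apply Gk_cpt; auto.
Qed.

Lemma PP_derive z u : 0 < u -> is_derive (PP z) u (Pd z u).
Proof.
  intros Hu.
  apply is_derive_ext_loc with (f := fun t => ss t * exp (- z * cc t)).
  { apply (filter_imp (fun t => 0 < t)). intros t Ht. unfold PP. destruct (Rle_dec t 0). lra. auto.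
    apply locally_pos; auto. }
  unfold Pd, Gk. destruct (Rle_dec u 0). lra.
  unfold ss, cc. auto_derive. lra. simpl. unfold Rdiv. field. lra.
Qed.

Lemma small_zero (X C : R) : (forall e, 0 < e <= 1 -> Rabs X <= C * e) -> X = 0.
Proof.
  intros H. destruct (Req_dec X 0) as [|HX]; auto. exfalso.
  pose proof (Rabs_pos_lt X HX) as HXp.
  assert (HC : 0 < C). { pose proof (H 1 ltac:(lra)). lra. }
  set (e := Rmin 1 (Rabs X / (2 * C))).
  assert (He : 0 < e). { apply Rmin_pos. lra. apply Rdiv_lt_0_compat; lra. }
  pose proof (Rmin_l 1 (Rabs X / (2 * C))). pose proof (Rmin_r 1 (Rabs X / (2 * C))).
  pose proof (H e ltac:(unfold e in *; lra)).
  assert (C * e <= Rabs X / 2). { apply Rle_trans with (C * (Rabs X / (2 * C))).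
    apply Rmult_le_compat_l; unfold e in *; lra. right; field; lra. }
  lra.
Qed.

Lemma KI z : 0 < z ->
  z * RInt (Gk 2 z) 0 1 = z * RInt (Gk 0 z) 0 1 + RInt (Gk 1 z) 0 1.
Proof.
  intros Hz.
  assert (Hex : forall a b, ex_RInt (Pd z) a b).
  { intros. apply (ex_RInt_continuous (V:=R_CompleteNormedModule)). intros; apply Pd_cont; auto. }
  assert (Eint : RInt (Pd z) 0 1 = z * RInt (Gk 2 z) 0 1 - z * RInt (Gk 0 z) 0 1 - RInt (Gk 1 z) 0 1).
  { apply is_RInt_unique. unfold Pd.
    apply (is_RInt_minus (V:=R_NormedModule)). apply (is_RInt_minus (V:=R_NormedModule)).
    apply (is_RInt_scal (V:=R_NormedModule)). apply (RInt_correct (V:=R_CompleteNormedModule)), Gk_exRInt; auto.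
    apply (is_RInt_scal (V:=R_NormedModule)). apply (RInt_correct (V:=R_CompleteNormedModule)), Gk_exRInt; auto.
    apply (RInt_correct (V:=R_CompleteNormedModule)), Gk_exRInt; auto. }
  set (C := z * Mk 2 z + z * Mk 0 z + 2 * Mk 1 z).
  assert (Z : RInt (Pd z) 0 1 = 0).
  { apply (small_zero _ C). intros e He.
    assert (E1 : RInt (Pd z) e 1 = PP z 1 - PP z e).
    { apply is_RInt_unique. apply (is_RInt_derive (V:=R_CompleteNormedModule)).
      intros x Hx. rewrite Rmin_left, Rmax_right in Hx by lra. apply PP_derive. lra.
      intros; apply Pd_cont; auto. }
    assert (P1 : PP z 1 = 0). { unfold PP, ss. destruct (Rle_dec 1 0). lra. rewrite Rinv_1. field. }
    assert (HPe : Rabs (PP z e) <= Mk 1 z * e).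
    { unfold PP. destruct (Rle_dec e 0). lra.
      assert (Hie : 1 <= / e). { rewrite <- Rinv_1. apply Rinv_le_contravar; lra. }
      assert (0 <= ss e <= cc e). { unfold ss, cc. lra. }
      rewrite Rabs_pos_eq by (apply Rmult_le_pos; [lra| left; apply exp_pos]).
      apply Rle_trans with (e * Gk 1 z e).
      - unfold Gk. destruct (Rle_dec e 0). lra. simpl.
        replace (e * (cc e * 1 * exp (- z * cc e) / e)) with (cc e * exp (- z * cc e)) by (field; lra).
        apply Rmult_le_compat_r. left; apply exp_pos. lra.
      - pose proof (Gk_le_M 1 z e Hz ltac:(lra)). rewrite Rabs_pos_eq in H0 by apply Gk_nonneg.
        nra. }
    assert (HPd : forall t, 0 <= t <= 1 -> Rabs (Pd z t) <= z * Mk 2 z + z * Mk 0 z + Mk 1 z).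
    { intros t Ht. unfold Pd.
      pose proof (Gk_le_M 2 z t Hz Ht). pose proof (Gk_le_M 0 z t Hz Ht). pose proof (Gk_le_M 1 z t Hz Ht).
      rewrite Rabs_pos_eq in * by apply Gk_nonneg.
      pose proof (Gk_nonneg 2 z t). pose proof (Gk_nonneg 0 z t). pose proof (Gk_nonneg 1 z t).
      apply Rabs_le. split; nra. }
    assert (HI0 : Rabs (RInt (Pd z) 0 e) <= (e - 0) * (z * Mk 2 z + z * Mk 0 z + Mk 1 z)).
    { apply abs_RInt_le_const. lra. auto. intros; apply HPd; lra. }
    rewrite <- (RInt_Chasles (V:=R_CompleteNormedModule) (Pd z) 0 e 1) by auto.
    unfold plus; simpl. rewrite E1, P1.
    eapply Rle_trans. apply Rabs_triang. rewrite Rabs_minus_sym, Rminus_0_r.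
    unfold C. pose proof (Mk_pos 1 z Hz). nra. }
  lra.
Qed.

Lemma K_pos n z : (n <= 1)%nat -> 0 < z -> 0 < BesselK n z.
Proof.
  intros Hn Hz. rewrite BesselK_eq by auto. apply RInt_gt_0. lra.
  intros x Hx. unfold Gk. destruct (Rle_dec x 0). lra.
  assert (0 < cc x). { unfold cc. assert (0 < / x) by (apply Rinv_0_lt_compat; lra). lra. }
  apply Rdiv_lt_0_compat; [|lra]. apply Rmult_lt_0_compat. apply pow_lt; auto. apply exp_pos.
  intros; apply Gk_cont1; auto.
Qed.
Lemma K0_derive z : 0 < z -> is_derive (BesselK 0) z (- BesselK 1 z).
Proof.
  intros Hz. rewrite (BesselK_eq 1) by auto.
  apply is_derive_ext_loc with (f := fun y => RInt (Gk 0 y) 0 1).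
  apply (filter_imp (fun y => 0 < y)). intros y Hy. rewrite BesselK_eq; auto.
  apply locally_pos; auto.
  apply KD; auto.
Qed.

Lemma K1_derive z : 0 < z -> is_derive (BesselK 1) z (- BesselK 0 z - BesselK 1 z / z).
Proof.
  intros Hz.
  replace (- BesselK 0 z - BesselK 1 z / z) with (- RInt (Gk 2 z) 0 1).
  2:{ rewrite !BesselK_eq by auto. pose proof (KI z Hz).
      apply (Rmult_eq_reg_l z). replace (z * - RInt (Gk 2 z) 0 1) with (-(z*RInt(Gk 2 z) 0 1)) by ring. rewrite H. field. lra. lra. }
  apply is_derive_ext_loc with (f := fun y => RInt (Gk 1 y) 0 1).
  apply (filter_imp (fun y => 0 < y)). intros y Hy. rewrite BesselK_eq; auto.
  apply locally_pos; auto.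
  apply KD; auto.
Qed.
Definition ia (n : nat) := / (INR (fact n) * INR (fact n)).
Definition ib (n : nat) := / (INR (fact n) * INR (fact (n + 1))).

Lemma fact_pos_R n : 0 < INR (fact n).
Proof. apply INR_fact_lt_0. Qed.

Lemma fact_S_R n : INR (fact (S n)) = INR (S n) * INR (fact n).
Proof. rewrite <- mult_INR. reflexivity. Qed.

Lemma CV_ia : CV_radius ia = p_infty.
Proof.
  apply CV_radius_infinite_DAlembert.
  - intros n. unfold ia. apply Rinv_neq_0_compat. pose proof (fact_pos_R n). nra.
  - apply is_lim_seq_le_le with (u := fun _ => 0) (w := fun n => / INR (S n)).
    + intros n. unfold ia. rewrite fact_S_R.
      pose proof (fact_pos_R n). assert (1 <= INR (S n)) by (apply (le_INR 1); lia).
      replace (/ (INR (S n) * INR (fact n) * (INR (S n) * INR (fact n))) /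
                / (INR (fact n) * INR (fact n))) with (/ (INR (S n) * INR (S n))) by (field; lra).
      rewrite Rabs_pos_eq.
      2:{ left; apply Rinv_0_lt_compat; nra. }
      split. left; apply Rinv_0_lt_compat; nra.
      apply Rinv_le_contravar; nra.
    + apply is_lim_seq_const.
    + replace (Finite 0) with (Rbar_inv p_infty) by reflexivity.
      apply is_lim_seq_inv. apply (is_lim_seq_incr_1 INR p_infty). apply is_lim_seq_INR.
      discriminate.
Qed.

Lemma PSd_ia n : PS_derive ia n = ib n.
Proof.
  unfold PS_derive, ia, ib. rewrite Nat.add_1_r, fact_S_R.
  pose proof (fact_pos_R n). assert (0 < INR (S n)) by (apply lt_0_INR; lia).
  field. split; lra.
Qed.

Lemma PSd_incr n : PS_derive (PS_incr_1 ib) n = ia n.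
Proof.
  unfold PS_derive, ia, ib. simpl PS_incr_1. rewrite Nat.add_1_r, fact_S_R.
  pose proof (fact_pos_R n). assert (0 < INR (S n)) by (apply lt_0_INR; lia).
  field. split; lra.
Qed.

Lemma CV_ib : CV_radius ib = p_infty.
Proof.
  rewrite <- CV_ia, <- (CV_radius_derive ia). apply CV_radius_ext. intros; symmetry; apply PSd_ia.
Qed.

Lemma f_derive s : is_derive (PSeries ia) s (PSeries ib s).
Proof.
  rewrite <- (PSeries_ext (PS_derive ia)) by apply PSd_ia.
  apply is_derive_PSeries. rewrite CV_ia. simpl; auto.
Qed.

Lemma sg_derive s : is_derive (fun s => s * PSeries ib s) s (PSeries ia s).
Proof.
  apply is_derive_ext with (f := PSeries (PS_incr_1 ib)).
  intros; apply PSeries_incr_1.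
  rewrite <- (PSeries_ext (PS_derive (PS_incr_1 ib))) by apply PSd_incr.
  apply is_derive_PSeries. rewrite CV_radius_incr_1, CV_ib. simpl; auto.
Qed.

Lemma PSeries_ge a s : (forall n, 0 <= a n) -> 0 <= s -> CV_radius a = p_infty -> a 0%nat <= PSeries a s.
Proof.
  intros Ha Hs Hcv.
  rewrite PSeries_decr_1.
  2:{ apply CV_radius_inside. rewrite Hcv. simpl; auto. }
  assert (0 <= PSeries (PS_decr_1 a) s).
  { assert (S0 : Series (fun _ : nat => 0) = 0).
    { transitivity (Series (fun n : nat => 0 * 1)). apply Series_ext; intros; ring.
      rewrite Series_scal_l. ring. }
    unfold PSeries. rewrite <- S0.
    apply Series_le. intros n. split. lra. unfold PS_decr_1. apply Rmult_le_pos; auto. apply pow_le; auto.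
    apply ex_pseries_R. apply CV_radius_inside. rewrite CV_radius_decr_1, Hcv. simpl; auto. }
  nra.
Qed.

Lemma ia_pos s : 0 <= s -> 0 < PSeries ia s.
Proof.
  intros Hs. eapply Rlt_le_trans. 2: apply PSeries_ge; auto.
  unfold ia; simpl. lra.
  intros n; unfold ia. pose proof (fact_pos_R n). left; apply Rinv_0_lt_compat; nra.
  apply CV_ia.
Qed.

Lemma ib_pos s : 0 <= s -> 0 < PSeries ib s.
Proof.
  intros Hs. eapply Rlt_le_trans. 2: apply PSeries_ge; auto.
  unfold ib; simpl. lra.
  intros n; unfold ib. pose proof (fact_pos_R n). pose proof (fact_pos_R (n+1)). left; apply Rinv_0_lt_compat; nra.
  apply CV_ib.
Qed.

Lemma I0_eq z : BesselI 0 z = PSeries ia ((z / 2) ^ 2).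
Proof.
  unfold BesselI, PSeries. apply Series_ext. intros k.
  unfold ia. rewrite !Nat.add_0_r, <- pow_mult. field.
  pose proof (fact_pos_R k). lra.
Qed.

Lemma I1_eq z : BesselI 1 z = z / 2 * PSeries ib ((z / 2) ^ 2).
Proof.
  unfold PSeries. rewrite <- Series_scal_l. unfold BesselI. apply Series_ext. intros k.
  unfold ib. rewrite <- pow_mult, !Nat.add_1_r, <- tech_pow_Rmult. field.
  pose proof (fact_pos_R k). pose proof (fact_pos_R (S k)). lra.
Qed.
Lemma deriv_cpt f x l : is_derive f x l -> continuity_pt f x.
Proof.
  intros H. apply continuity_pt_filterlim.
  apply (ex_derive_continuous (K:=R_AbsRing) (V:=R_NormedModule)). exists l; auto.
Qed.

Lemma endpoint_zero f a : continuity_pt f a -> 0 <= a <= 1 ->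
  (forall y, 0 < y < 1 -> f y = 0) -> f a = 0.
Proof.
  intros Hc Ha Hf. destruct (Req_dec (f a) 0) as [|Hn]; auto. exfalso.
  pose proof (Rabs_pos_lt _ Hn) as Hp.
  assert (Ha2 : a <> 1/2) by (intro; apply Hn; apply Hf; lra).
  destruct (Hc (Rabs (f a)) Hp) as [alp [Halp Hd]].
  set (t := Rmin 1 alp).
  assert (Ht : 0 < t <= 1). { split. apply Rmin_pos; lra. apply Rmin_l. }
  assert (Hta : t <= alp) by apply Rmin_r.
  set (y := a + (1/2 - a) * t).
  assert (Hy : 0 < y < 1). { unfold y. nra. }
  assert (Hya : Rabs (y - a) < alp).
  { unfold y. replace (a + (1 / 2 - a) * t - a) with ((1/2 - a) * t) by ring.
    rewrite Rabs_mult, (Rabs_pos_eq t) by lra.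
    assert (Rabs (1/2 - a) <= 1/2) by (apply Rabs_le; lra). nra. }
  specialize (Hd y). simpl in Hd. unfold R_dist in Hd.
  rewrite Hf in Hd by auto. rewrite Rminus_0_l, Rabs_Ropp in Hd.
  assert (Rabs (f a) < Rabs (f a)). { apply Hd. split. unfold D_x, no_cond. split; auto. unfold y. intro.
    assert ((1/2 - a) * t = 0) by lra. apply Rmult_integral in H0. destruct H0; [apply Ha2; lra| lra]. auto. }
  lra.
Qed.

Lemma uniq (E H nu : R -> R) (b : R) : 0 < b ->
  (forall x, 0 <= x <= 1 -> 0 < nu x) ->
  (forall x, 0 <= x <= 1 -> is_derive E x (b * H x / nu x)) ->
  (forall x, 0 <= x <= 1 -> is_derive H x (E x)) ->
  E 0 = 0 -> H 1 = 0 -> forall x, 0 <= x <= 1 -> E x = 0 /\ H x = 0.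
Proof.
  intros Hb Hnu HE HH E0 H1.
  set (W := fun x => E x * H x).
  set (dW := fun x => b * H x / nu x * H x + E x * E x).
  assert (HW : forall x, 0 <= x <= 1 -> is_derive W x (dW x)).
  { intros x Hx. unfold W, dW.
    pose proof (is_derive_mult E H x _ _ (HE x Hx) (HH x Hx)) as Hm.
    simpl in Hm. unfold mult, plus in Hm; simpl in Hm. apply Hm. intros; apply Rmult_comm. }
  assert (HdW : forall x, 0 <= x <= 1 -> 0 <= dW x).
  { intros x Hx. unfold dW. pose proof (Hnu x Hx).
    assert (0 <= b * H x / nu x * H x).
    { replace (b * H x / nu x * H x) with (b * (H x * H x) / nu x) by (field; lra).
      apply Rmult_le_pos. apply Rmult_le_pos. lra. apply Rle_0_sqr. left; apply Rinv_0_lt_compat; lra. }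
    pose proof (Rle_0_sqr (E x)). unfold Rsqr in *. lra. }
  assert (W0 : forall x, 0 <= x <= 1 -> W x = 0).
  { intros x Hx.
    destruct (MVT_gen W 0 x dW) as [c [Hc Ec]].
    { intros y Hy. rewrite Rmin_left, Rmax_right in Hy by lra. apply HW; lra. }
    { intros y Hy. rewrite Rmin_left, Rmax_right in Hy by lra. apply (deriv_cpt _ _ _ (HW y ltac:(lra))). }
    destruct (MVT_gen W x 1 dW) as [c' [Hc' Ec']].
    { intros y Hy. rewrite Rmin_left, Rmax_right in Hy by lra. apply HW; lra. }
    { intros y Hy. rewrite Rmin_left, Rmax_right in Hy by lra. apply (deriv_cpt _ _ _ (HW y ltac:(lra))). }
    rewrite Rmin_left, Rmax_right in Hc, Hc' by lra.
    assert (W 0 = 0) by (unfold W; rewrite E0; ring).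
    assert (W 1 = 0) by (unfold W; rewrite H1; ring).
    pose proof (HdW c ltac:(lra)). pose proof (HdW c' ltac:(lra)).
    assert (0 <= dW c * (x - 0)) by (apply Rmult_le_pos; lra).
    assert (0 <= dW c' * (1 - x)) by (apply Rmult_le_pos; lra).
    lra. }
  assert (Hint : forall x, 0 < x < 1 -> E x = 0 /\ H x = 0).
  { intros x Hx.
    assert (Hd0 : is_derive W x 0).
    { apply is_derive_ext_loc with (f := fun _ => 0).
      apply (filter_imp (fun y => 0 < y /\ y < 1)). intros y Hy. symmetry; apply W0; lra.
      apply (open_and _ _ (open_gt 0) (open_lt 1)). auto.
      apply (is_derive_const (K:=R_AbsRing) (V:=R_NormedModule)). }
    assert (Z : dW x = 0).
    { apply is_derive_unique in Hd0. rewrite (is_derive_unique _ _ _ (HW x ltac:(lra))) in Hd0. auto. }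
    unfold dW in Z. pose proof (Hnu x ltac:(lra)).
    assert (0 <= b * H x / nu x * H x).
    { replace (b * H x / nu x * H x) with (b * (H x * H x) / nu x) by (field; lra).
      apply Rmult_le_pos. apply Rmult_le_pos. lra. apply Rle_0_sqr. left; apply Rinv_0_lt_compat; lra. }
    pose proof (Rle_0_sqr (E x)). unfold Rsqr in *.
    assert (HEE : E x * E x = 0) by lra.
    assert (HB : b * (H x * H x) / nu x = 0) by (replace (b * (H x * H x) / nu x) with (b * H x / nu x * H x) by (field; lra); lra).
    split. apply Rmult_integral in HEE. destruct HEE; auto.
    assert (HHH : H x * H x = 0).
    { apply (Rmult_eq_reg_l (b / nu x)). rewrite Rmult_0_r. rewrite <- HB. field. lra.
      apply Rgt_not_eq. apply Rdiv_lt_0_compat; lra. }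
    apply Rmult_integral in HHH. destruct HHH; auto. }
  intros x Hx. split.
  - apply (endpoint_zero E x). apply (deriv_cpt _ _ _ (HE x Hx)). auto. apply Hint.
  - apply (endpoint_zero H x). apply (deriv_cpt _ _ _ (HH x Hx)). auto. apply Hint.
Qed.
Lemma lin2 (F G : R -> R) a b x dF dG : is_derive F x dF -> is_derive G x dG ->
  is_derive (fun y => a * F y + b * G y) x (a * dF + b * dG).
Proof.
  intros HF HG. auto_derive.
  repeat split; try (eexists; eauto).
  change (fun x0 => F x0) with F. change (fun x0 => G x0) with G.
  rewrite (is_derive_unique F x dF HF), (is_derive_unique G x dG HG). ring.
Qed.

Lemma mul2 (F G : R -> R) x dF dG : is_derive F x dF -> is_derive G x dG ->
  is_derive (fun y => F y * G y) x (dF * G x + F x * dG).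
Proof.
  intros HF HG. auto_derive.
  repeat split; try (eexists; eauto).
  change (fun x0 => F x0) with F. change (fun x0 => G x0) with G.
  rewrite (is_derive_unique F x dF HF), (is_derive_unique G x dG HG). ring.
Qed.

Lemma comp_aff (F : R -> R) a c x dF : is_derive F (a * (c - x)) dF ->
  is_derive (fun y => F (a * (c - y))) x (- a * dF).
Proof.
  intros HF. pose proof (is_derive_comp F (fun y => a * (c - y)) x dF (- a) HF) as H.
  apply H. auto_derive. auto. ring.
Qed.

Definition Afun (C1 C2 s : R) := C1 * PSeries ia s + C2 * BesselK 0 (2 * sqrt s).
Definition Bfun (C1 C2 s : R) := C1 * (s * PSeries ib s) - C2 * (sqrt s * BesselK 1 (2 * sqrt s)).

Lemma sqrtK_derive n d s : 0 < s -> 0 < 2 * sqrt s -> is_derive (BesselK n) (2 * sqrt s) d ->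
  is_derive (fun y => BesselK n (2 * sqrt y)) s (d / sqrt s).
Proof.
  intros Hs Hz Hd. pose proof (is_derive_comp (BesselK n) (fun y => 2 * sqrt y) s d (/ sqrt s) Hd) as H.
  replace (d / sqrt s) with (scal (/ sqrt s) d). apply H.
  auto_derive. auto. assert (0 < sqrt s) by (apply sqrt_lt_R0; auto). field. lra.
  unfold scal; simpl; unfold mult; simpl. field. lra.
Qed.

Lemma A_derive C1 C2 s : 0 < s -> is_derive (Afun C1 C2) s (Bfun C1 C2 s / s).
Proof.
  intros Hs. assert (Hq : 0 < sqrt s) by (apply sqrt_lt_R0; auto).
  assert (Hz : 0 < 2 * sqrt s) by lra.
  unfold Afun.
  eapply is_derive_ext. intros; reflexivity.
  replace (Bfun C1 C2 s / s) with (C1 * PSeries ib s + C2 * (- BesselK 1 (2 * sqrt s) / sqrt s)).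
  apply lin2. apply f_derive. apply sqrtK_derive; auto. apply K0_derive; auto.
  unfold Bfun. pose proof (sqrt_sqrt s ltac:(lra)) as Hss. set (q := sqrt s) in *. rewrite <- Hss. field. lra.
Qed.

Lemma B_derive C1 C2 s : 0 < s -> is_derive (Bfun C1 C2) s (Afun C1 C2 s).
Proof.
  intros Hs. assert (Hq : 0 < sqrt s) by (apply sqrt_lt_R0; auto).
  assert (Hz : 0 < 2 * sqrt s) by lra.
  unfold Bfun.
  apply is_derive_ext with (f := fun y => C1 * (y * PSeries ib y) + (- C2) * (sqrt y * BesselK 1 (2 * sqrt y))).
  intros t; simpl; ring.
  replace (Afun C1 C2 s) with (C1 * PSeries ia s + - C2 *
     (/ (2 * sqrt s) * BesselK 1 (2 * sqrt s) + sqrt s * ((- BesselK 0 (2 * sqrt s) - BesselK 1 (2 * sqrt s) / (2 * sqrt s)) / sqrt s))).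
  apply lin2. apply sg_derive.
  apply (mul2 sqrt (fun y => BesselK 1 (2 * sqrt y))). auto_derive. auto. field. lra.
  apply sqrtK_derive; auto. apply K1_derive; auto.
  unfold Afun. field. lra.
Qed.
Lemma lin3 (F G H : R -> R) a b c x : ex_derive F x -> ex_derive G x -> ex_derive H x ->
  is_derive (fun y => a * F y + b * G y + c * H y) x (a * Derive F x + b * Derive G x + c * Derive H x).
Proof.
  intros. auto_derive. auto.
  change (fun x0 => F x0) with F. change (fun x0 => G x0) with G. change (fun x0 => H x0) with H. ring.
Qed.

Lemma dq (p u w : R -> R) be t0i p0 s1 s2 w0 ql x : ex_derive p x -> ex_derive u x -> ex_derive w x ->
  is_derive (fun y => be * (t0i * (p0 - p y) + s1 * u y + s2 * (w y - w0)) - ql) x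
    (be * (- t0i * Derive p x + s1 * Derive u x + s2 * Derive w x)).
Proof.
  intros. auto_derive. auto.
  change (fun x0 => p x0) with p. change (fun x0 => u x0) with u. change (fun x0 => w x0) with w. ring.
Qed.

Lemma half_sq s : 0 <= s -> (2 * sqrt s / 2) ^ 2 = s.
Proof. intros. replace (2 * sqrt s / 2) with (sqrt s) by field. apply pow2_sqrt; auto. Qed.

Lemma half_s s : 2 * sqrt s / 2 = sqrt s.
Proof. field. Qed.

Theorem mainTheorem3
  (L K Lpa t0 numin numax sigma1 sigma2 p0 w0 wD ql : R)
  (p u w : R -> R)
  (HL : 0 < L) (HK : 0 < K) (HLpa : 0 < Lpa) (Ht0 : 0 < t0)
  (Hnumin : 0 < numin) (Hnu : numin < numax)
  (Hp : C2_on01 p) (Hu : C2_on01 u) (Hw : C2_on01 w) :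
  let beta := Lpa * L ^ 2 / K in
  let nu := fun x => numax - (numax - numin) * x in
  let qU := fun x => beta * (/ t0 * (p0 - p x) + sigma1 * u x + sigma2 * (w x - w0)) in
  let jU := fun x => L * nu x *
              (- / t0 * Derive p x + sigma1 * Derive u x + sigma2 * Derive w x) in
  (forall x, 0 <= x <= 1 ->
     / t0 * Derive (fun y => nu y * Derive p y) x
     - sigma1 * Derive (fun y => nu y * Derive u y) x
     - sigma2 * Derive (fun y => nu y * Derive w y) x
     + qU x - ql = 0) ->
  p 0 = 1 -> u 0 = 1 -> w 0 = wD ->
  Derive p 1 = 0 -> Derive u 1 = 0 -> Derive w 1 = 0 ->
  let nustar := numax / (numax - numin) in
  let deltastar := Lpa * L ^ 2 / (K * (numax - numin)) in
  let z := fun x => 2 * sqrt (deltastar * (nustar - x)) in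
  let z0 := z 0 in
  let z1 := z 1 in
  let q0 := beta * (/ t0 * (p0 - 1) + sigma1 + sigma2 * (wD - w0)) in
  let D := BesselI 0 z0 * BesselK 1 z1 + BesselK 0 z0 * BesselI 1 z1 in
  let C1 := (q0 - ql) * BesselK 1 z1 / D in
  let C2 := (q0 - ql) * BesselI 1 z1 / D in
  forall x, 0 <= x <= 1 ->
    qU x = C1 * BesselI 0 (z x) + C2 * BesselK 0 (z x) + ql /\
    jU x = - L * sqrt ((nustar - x) / deltastar) *
             (C1 * BesselI 1 (z x) - C2 * BesselK 1 (z x)).
Proof.
  intros beta nu qU jU HODE Hp0 Hu0 Hw0 Hp1 Hu1 Hw1 nustar deltastar z z0 z1 q0 D C1 C2 x Hx.
  assert (Hd : 0 < numax - numin) by lra.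
  assert (HL2 : 0 < Lpa * L ^ 2) by (apply Rmult_lt_0_compat; auto; apply pow_lt; auto).
  assert (Hdel : 0 < deltastar).
  { unfold deltastar. apply Rdiv_lt_0_compat; auto. apply Rmult_lt_0_compat; auto. }
  assert (HN : 1 < nustar).
  { assert (nustar - 1 = numin / (numax - numin)) by (unfold nustar; field; lra).
    assert (0 < numin / (numax - numin)) by (apply Rdiv_lt_0_compat; auto). lra. }
  assert (Hbeta : beta = deltastar * (numax - numin)).
  { unfold beta, deltastar. field. lra. }
  assert (Hnuf : forall y, nu y = (numax - numin) * (nustar - y)).
  { intros; unfold nu, nustar; field; lra. }
  assert (Hbpos : 0 < beta) by (rewrite Hbeta; apply Rmult_lt_0_compat; auto).
  assert (HS : forall y, 0 <= y <= 1 -> 0 < deltastar * (nustar - y)).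
  { intros y Hy. apply Rmult_lt_0_compat; lra. }
  assert (Hnupos : forall y, 0 <= y <= 1 -> 0 < nu y).
  { intros y Hy. rewrite Hnuf. apply Rmult_lt_0_compat; lra. }
  assert (Hz : forall y, 0 <= y <= 1 -> 0 < z y).
  { intros y Hy. unfold z. pose proof (sqrt_lt_R0 _ (HS y Hy)). lra. }
  assert (HDpos : 0 < D).
  { unfold D, z0, z1.
    pose proof (Hz 0 ltac:(lra)). pose proof (Hz 1 ltac:(lra)).
    assert (0 < BesselI 0 (z 0)).
    { rewrite I0_eq. apply ia_pos. apply pow2_ge_0. }
    assert (0 < BesselI 1 (z 1)).
    { rewrite I1_eq. apply Rmult_lt_0_compat. lra. apply ib_pos, pow2_ge_0. }
    pose proof (K_pos 0 (z 0) ltac:(lia) ltac:(auto)).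
    pose proof (K_pos 1 (z 1) ltac:(lia) ltac:(auto)).
    nra. }
  set (Fc := fun y => Afun C1 C2 (deltastar * (nustar - y))).
  set (Hc := fun y => (- / deltastar) * Bfun C1 C2 (deltastar * (nustar - y))).
  set (Qr := fun y => qU y - ql).
  set (Hr := fun y => nu y * (- / t0 * Derive p y + sigma1 * Derive u y + sigma2 * Derive w y)).
  assert (dFc : forall y, 0 <= y <= 1 -> is_derive Fc y (beta * Hc y / nu y)).
  { intros y Hy. pose proof (HS y Hy).
    pose proof (comp_aff (Afun C1 C2) deltastar nustar y _ (A_derive C1 C2 _ H)) as Hc1.
    replace (beta * Hc y / nu y) with (- deltastar * (Bfun C1 C2 (deltastar * (nustar - y)) / (deltastar * (nustar - y)))).
    apply Hc1. unfold Hc. rewrite Hnuf, Hbeta. field. split; lra. }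
  assert (dHc : forall y, 0 <= y <= 1 -> is_derive Hc y (Fc y)).
  { intros y Hy. pose proof (HS y Hy).
    pose proof (comp_aff (Bfun C1 C2) deltastar nustar y _ (B_derive C1 C2 _ H)) as Hc1.
    replace (Fc y) with (- / deltastar * (- deltastar * Afun C1 C2 (deltastar * (nustar - y)))).
    apply (is_derive_scal (fun y => Bfun C1 C2 (deltastar * (nustar - y)))). apply Hc1.
    unfold Fc. field. lra. }
  assert (dQr : forall y, 0 <= y <= 1 -> is_derive Qr y (beta * Hr y / nu y)).
  { intros y Hy. destruct (Hp y Hy) as [Ep _]. destruct (Hu y Hy) as [Eu _]. destruct (Hw y Hy) as [Ew _].
    pose proof (dq p u w beta (/ t0) p0 sigma1 sigma2 w0 ql y Ep Eu Ew) as H.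
    replace (beta * Hr y / nu y) with (beta * (- / t0 * Derive p y + sigma1 * Derive u y + sigma2 * Derive w y)).
    apply H. unfold Hr. pose proof (Hnupos y Hy). field. split; lra. }
  assert (Enu : forall F y, ex_derive F y -> ex_derive (fun t => nu t * F t) y).
  { intros F y [dF HF]. eexists. apply (mul2 nu F y (- (numax - numin)) dF).
    unfold nu. auto_derive. auto. ring. auto. }
  assert (dHr : forall y, 0 <= y <= 1 -> is_derive Hr y (Qr y)).
  { intros y Hy. destruct (Hp y Hy) as [_ [Ep _]]. destruct (Hu y Hy) as [_ [Eu _]]. destruct (Hw y Hy) as [_ [Ew _]].
    pose proof (lin3 _ _ _ (- / t0) sigma1 sigma2 y (Enu _ y Ep) (Enu _ y Eu) (Enu _ y Ew)) as H.
    apply is_derive_ext with (g := Hr) in H.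
    2:{ intros t. unfold Hr. simpl. ring. }
    replace (Qr y) with (- / t0 * Derive (fun t => nu t * Derive p t) y +
        sigma1 * Derive (fun t => nu t * Derive u t) y + sigma2 * Derive (fun t => nu t * Derive w t) y).
    apply H. unfold Qr. pose proof (HODE y Hy). lra. }
  assert (E0 : Qr 0 - Fc 0 = 0).
  { unfold Qr, qU, Fc, Afun. rewrite Hp0, Hu0, Hw0.
    fold q0.
    replace (C1 * PSeries ia (deltastar * (nustar - 0)) + C2 * BesselK 0 (2 * sqrt (deltastar * (nustar - 0))))
      with (C1 * BesselI 0 z0 + C2 * BesselK 0 z0).
    2:{ unfold z0, z. rewrite I0_eq, half_sq. reflexivity. left; apply HS; lra. }
    assert (HC : C1 * BesselI 0 z0 + C2 * BesselK 0 z0 = q0 - ql).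
    { unfold C1, C2.
      replace ((q0 - ql) * BesselK 1 z1 / D * BesselI 0 z0 + (q0 - ql) * BesselI 1 z1 / D * BesselK 0 z0)
        with ((q0 - ql) * (BesselI 0 z0 * BesselK 1 z1 + BesselK 0 z0 * BesselI 1 z1) / D) by (field; lra).
      change (BesselI 0 z0 * BesselK 1 z1 + BesselK 0 z0 * BesselI 1 z1) with D. field. lra. }
    rewrite HC. unfold q0. ring. }
  assert (E1 : Hr 1 - Hc 1 = 0).
  { unfold Hr, Hc, Bfun. rewrite Hp1, Hu1, Hw1.
    pose proof (HS 1 ltac:(lra)) as HS1.
    set (s1 := deltastar * (nustar - 1)) in *.
    assert (HI1 : BesselI 1 z1 = sqrt s1 * PSeries ib s1).
    { unfold z1, z. rewrite I1_eq. fold s1. rewrite half_sq, half_s by lra. reflexivity. }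
    replace (s1 * PSeries ib s1) with (sqrt s1 * (sqrt s1 * PSeries ib s1)).
    2:{ rewrite <- Rmult_assoc, sqrt_sqrt by lra. reflexivity. }
    rewrite <- HI1. replace (BesselK 1 (2 * sqrt s1)) with (BesselK 1 z1) by reflexivity. unfold C1, C2. field. lra. }
  pose proof (uniq (fun y => Qr y - Fc y) (fun y => Hr y - Hc y) nu beta Hbpos Hnupos) as U.
  destruct (U) with (x := x) as [U1 U2]; auto.
  { intros y Hy. replace (beta * (Hr y - Hc y) / nu y) with (beta * Hr y / nu y - beta * Hc y / nu y).
    apply (is_derive_minus Qr Fc). apply dQr; auto. apply dFc; auto.
    pose proof (Hnupos y Hy). field. lra. }
  { intros y Hy. apply (is_derive_minus Hr Hc). apply dHr; auto. apply dHc; auto. }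
  clear U. split.
  - assert (qU x = Fc x + ql) as -> by (unfold Qr in U1; lra).
    unfold Fc, Afun, z. rewrite I0_eq, half_sq. reflexivity. left; apply HS; auto.
  - assert (jU x = L * Hr x) as -> by (unfold jU, Hr; ring).
    assert (Hr x = Hc x) as -> by lra.
    pose proof (HS x Hx) as HSx.
    set (s := deltastar * (nustar - x)) in *.
    assert (Hsq : sqrt ((nustar - x) / deltastar) = sqrt s / deltastar).
    { replace ((nustar - x) / deltastar) with (s / (deltastar * deltastar)).
      rewrite sqrt_div_alt, sqrt_square by nra. reflexivity.
      unfold s. field. lra. }
    rewrite Hsq. unfold Hc, Bfun, z. fold s. rewrite I1_eq, half_sq, half_s by lra.
    pose proof (sqrt_sqrt s ltac:(lra)) as Hss. set (q := sqrt s) in *. rewrite <- Hss at 1.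
    field. lra.
Qed.
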